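(* Let $D$ be a division algebra, $\sigma\in\mathrm{Aut}(D)$, and suppose $F=\mathcal{Z}(D)\cap D_\sigma$ is infinite. Let $f\in D[t_1,\ldots,t_d;\sigma]$ be a nonzero skew polynomial. Then there exist $a\in D$ and $a_1,\ldots,a_{d-1}\in F$ such that the polynomial $g=a\cdot f(t_1+a_1t_d,\ldots,t_{d-1}+a_{d-1}t_d,t_d)$ is a monic polynomial in $t_d$ with coefficients in $D[t_1,\ldots,t_{d-1};\sigma]$.
   Context: $\mathcal{Z}(D)$ is the center of $D$ and $D_\sigma=\{r\in D:\sigma(r)=r\}$. $D[t_1,\ldots,t_d;\sigma]$ denotes the skew polynomial ring in pairwise commuting variables with $t_ir=\sigma(r)t_i$ for all $r\in D$ and all $i$; it is identified with $D[t_1,\ldots,t_{d-1};\sigma][t_d;\sigma]$, where $\sigma$ is extended by $\sigma(t_i)=t_i$. For $a_1,\ldots,a_{d-1}\in F$, $f(t_1+a_1t_d,\ldots,t_{d-1}+a_{d-1}t_d,t_d)$ denotes the image of $f$ under the unique ring endomorphism of $D[t_1,\ldots,t_d;\sigma]$ fixing $D$ pointwise and sending $t_i\mapsto t_i+a_it_d$ for $i<d$ and $t_d\mapsto t_d$. Monic in $t_d$ means that, written as $\sum_j c_jt_d^j$ with $c_j\in D[t_1,\ldots,t_{d-1};\sigma]$, its leading coefficient is $1$. *)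

(* Defs.v *)
From HB Require Import structures.
From mathcomp Require Import all_boot all_order all_algebra.
From mathcomp Require Import mpoly.
Set Implicit Arguments. Unset Strict Implicit. Unset Printing Implicit Defensive.
Import GRing.Theory.
Local Open Scope ring_scope.

(* Skew polynomial ring D[t_0,...,t_{k-1}; s] in k pairwise commuting
   variables with t_i r = s(r) t_i.  The underlying additive group is that of
   {mpoly D[k]} (finitely supported coefficient functions on monomials, a
   skew polynomial being written sum_m c_m t^m with coefficients on the
   left); the multiplication is the skew one:
     (c t^m) * (c' t^m') = c s^{|m|}(c') t^(m+m'). *)

Section Skew.
Variable D : unitRingType.
Variable s : D -> D.

Definition smul (k : nat) (p q : {mpoly D[k]}) : {mpoly D[k]} :=
  \sum_(m <- msupp p) \sum_(m' <- msupp q)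
     (p@_m * iter (mdeg m) s q@_m') *: 'X_[m + m'].

Definition spow (k : nat) (p : {mpoly D[k]}) (e : nat) : {mpoly D[k]} :=
  iter e (smul p) 1.

Definition inF (x : D) : Prop := (forall y : D, x * y = y * x) /\ s x = x.

(* Variables t_1..t_d are indexed by 'I_n.+1 (d = n+1); t_d is ord_max,
   and t_i (i < d) is widen_ord _ i for i : 'I_n. *)

Definition subst_var (n : nat) (a : 'I_n -> D) (i : 'I_n.+1) : {mpoly D[n.+1]} :=
  match split (cast_ord (esym (addn1 n)) i) with
  | inl j => 'X_(widen_ord (leqnSn n) j) + a j *: 'X_(@ord_max n)
  | inr _ => 'X_(@ord_max n)
  end.

(* f(t_1 + a_1 t_d, ..., t_{d-1} + a_{d-1} t_d, t_d): image of
   f = sum_m f_m t^m under the ring endomorphism fixing D pointwise,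
   i.e. sum_m f_m * prod_i phi(t_i)^(m_i) (skew products). *)
Definition subst (n : nat) (a : 'I_n -> D) (f : {mpoly D[n.+1]}) : {mpoly D[n.+1]} :=
  \sum_(m <- msupp f)
     f@_m *: \big[@smul n.+1/1]_(i < n.+1) spow (subst_var a i) (m i).

(* Writing p = sum_j c_j t_d^j with c_j in D[t_1..t_{d-1}; s]: *)
Definition deg_last (n : nat) (p : {mpoly D[n.+1]}) : nat :=
  \max_(m <- msupp p) m (@ord_max n).

Definition drop_last (n : nat) (m : 'X_{1..n.+1}) : 'X_{1..n} :=
  [multinom m (widen_ord (leqnSn n) i) | i < n].

Definition coef_last (n : nat) (p : {mpoly D[n.+1]}) (j : nat) : {mpoly D[n]} :=
  \sum_(m <- msupp p | m (@ord_max n) == j) p@_m *: 'X_[drop_last m].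

Definition monic_last (n : nat) (p : {mpoly D[n.+1]}) : Prop :=
  p != 0 /\ coef_last p (deg_last p) = 1.

End Skew.

(* Main.v *)
Require Import Defs.
From HB Require Import structures.
From mathcomp Require Import all_boot all_order all_algebra.
From mathcomp Require Import mpoly.
From Stdlib Require Import Classical.
Set Implicit Arguments. Unset Strict Implicit. Unset Printing Implicit Defensive.
Import GRing.Theory.
Local Open Scope ring_scope.

Section Aux.
Variable D : unitRingType.
Variable s : {rmorphism D -> D}.

Definition fixd k (p : {mpoly D[k]}) := map_mpoly s p = p.

Lemma fixd_coef k (p : {mpoly D[k]}) u : fixd p -> s p@_u = p@_u.
Proof. by move=> h; rewrite -mcoeff_map_mpoly h. Qed.

Lemma fixdM k (p q : {mpoly D[k]}) : fixd p -> fixd q -> fixd (p * q).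
Proof. rewrite /fixd => hp hq; rewrite rmorphM; congr (_ * _); [exact: hp | exact: hq]. Qed.

Lemma fixd1 k : fixd (1 : {mpoly D[k]}).
Proof. by rewrite /fixd rmorph1. Qed.

Lemma iter_fix (c : D) j : s c = c -> iter j s c = c.
Proof. by move=> h; elim: j => //= j ->. Qed.

Lemma smul_mul k (p q : {mpoly D[k]}) : fixd q -> smul s p q = p * q.
Proof.
move=> fq; rewrite /smul mpolyME big_allpairs; apply: eq_bigr => m _.
by apply: eq_bigr => m' _ /=; rewrite iter_fix // fixd_coef.
Qed.

Lemma spow_exp k (p : {mpoly D[k]}) e : fixd p -> spow s p e = p ^+ e /\ fixd (p ^+ e).
Proof.
move=> fp; elim: e => [|e [IH1 IH2]]; first by rewrite expr0; split => //; apply: fixd1.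
rewrite /spow /= -/(spow s p e) IH1 smul_mul // exprS; split => //.
exact: fixdM.
Qed.
End Aux.

Section Inv.
Variable D : unitRingType.
Variable s : {rmorphism D -> D}.
Variable x : D.
Hypothesis sx : s x = x.
Variable n : nat.

Definition Ud (k : nat) : 'X_{1..n.+1} := (U_(ord_max) *+ k)%MM.

Lemma Ud_max k : Ud k ord_max = k.
Proof. by rewrite /Ud mulmnE mnm1E eqxx mul1n. Qed.

Lemma UdD k1 k2 : (Ud k1 + Ud k2)%MM = Ud (k1 + k2).
Proof. by apply/mnmP => i; rewrite mnmDE /Ud !mulmnE mulnDr. Qed.

Definition Gd (k e : nat) (p : {mpoly D[n.+1]}) :=
  fixd s p /\ exists r, p = x ^+ e *: 'X_[Ud k] + r /\
     forall u, u \in msupp r -> (u ord_max < k)%N.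

Lemma sxe e : s (x ^+ e) = x ^+ e.
Proof. by rewrite rmorphXn /= sx. Qed.

Lemma Gd_le k e p : Gd k e p -> forall u, u \in msupp p -> (u ord_max <= k)%N.
Proof.
case=> _ [r [-> hr]] u /msuppD_le; rewrite mem_cat => /orP[/msuppZ_le|/hr/ltnW //].
by rewrite msuppX mem_seq1 => /eqP ->; rewrite Ud_max.
Qed.

Lemma Gd1 : Gd 0 0 1.
Proof.
split; first exact: fixd1.
exists 0; split; last by move=> u; rewrite msupp0.
by rewrite addr0 expr0 scale1r /Ud mulm0n mpolyX0.
Qed.

Lemma scaleXM (c1 c2 : D) m1 m2 :
  (c1 *: 'X_[m1]) * (c2 *: 'X_[m2]) = (c1 * c2) *: ('X_[(m1 + m2)%MM] : {mpoly D[n.+1]}).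
Proof.
rewrite -!mul_mpolyC mulrA -[_ * c2%:MP]mulrA -commr_mpolyX mulrA -mulrA.
by rewrite !mulrA -mpolyCM -mulrA -mpolyXD.
Qed.

Lemma GdM k1 e1 p k2 e2 q : Gd k1 e1 p -> Gd k2 e2 q -> Gd (k1 + k2) (e1 + e2) (p * q).
Proof.
move=> hp hq; have hqle := Gd_le hq.
case: hp => fp [r1 [ep hr1]]; case: hq => fq [r2 [eq hr2]].
split; first exact: fixdM.
exists ((x ^+ e1 *: 'X_[Ud k1]) * r2 + r1 * q); split.
  by rewrite {1}ep {1}eq mulrDl mulrDr scaleXM -exprD UdD addrA -eq.
move=> u /msuppD_le; rewrite mem_cat => /orP[] /msuppM_le /allpairsP [[m1 m2] [/= h1 h2 ->]];
  rewrite mnmDE.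
  move: h1 => /msuppZ_le; rewrite msuppX mem_seq1 => /eqP ->; rewrite Ud_max.
  by rewrite ltn_add2l hr2.
by rewrite -addSn leq_add // ?hr1 ?hqle.
Qed.

Lemma GdX k e p j : Gd k e p -> Gd (k * j) (e * j) (p ^+ j).
Proof.
move=> h; elim: j => [|j IH]; first by rewrite !muln0 expr0; apply: Gd1.
by rewrite exprS !mulnS; apply: GdM.
Qed.

Lemma Gdbig (I : Type) (r : seq I) (F : I -> {mpoly D[n.+1]}) km ke :
  (forall i, Gd (km i) (ke i) (F i)) ->
  Gd (\sum_(i <- r) km i) (\sum_(i <- r) ke i) (\big[@smul D s n.+1/1]_(i <- r) F i).
Proof.
move=> h; elim: r => [|i r IH]; first by rewrite !big_nil; apply: Gd1.
rewrite !big_cons smul_mul; first exact: GdM.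
by case: IH.
Qed.

Definition wB (B : nat) (i : 'I_n.+1) : nat := if (i < n)%N then (B ^ i)%N else 0%N.
Definition aB (B : nat) (j : 'I_n) : D := x ^+ (B ^ j).

Lemma Gd_var B i : Gd 1 (wB B i) (subst_var (aB B) i).
Proof.
rewrite /subst_var /wB; case: splitP => [j eij | k eik].
  have ei : widen_ord (leqnSn n) j = i by apply: val_inj; rewrite /= -eij.
  have -> : (i < n)%N by rewrite -ei /= ltn_ord.
  split.
    rewrite /fixd rmorphD /= map_mpolyX map_mpolyZ map_mpolyX /aB sxe.
    by rewrite ei.
  exists 'X_(widen_ord (leqnSn n) j); split.
    by rewrite addrC /Ud mulm1n /aB ei -eij.
  move=> u; rewrite msuppX mem_seq1 => /eqP ->; rewrite mnm1E.
  suff -> : (widen_ord (leqnSn n) j == ord_max) = false by [].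
  by apply/negbTE; rewrite -val_eqE /= neq_ltn ltn_ord.
have -> : (i < n)%N = false.
  by have e : (i : nat) = (n + k)%N := eik; rewrite e ltnNge leq_addr.
split; first by rewrite /fixd map_mpolyX.
exists 0; split; last by move=> u; rewrite msupp0.
by rewrite addr0 expr0 scale1r /Ud mulm1n.
Qed.

Lemma Gd_P B (m : 'X_{1..n.+1}) :
  Gd (mdeg m) (\sum_(i < n.+1) wB B i * m i)%N
     (\big[@smul D s n.+1/1]_(i < n.+1) spow s (subst_var (aB B) i) (m i)).
Proof.
have h : forall i, Gd (1 * m i) (wB B i * m i) (spow s (subst_var (aB B) i) (m i)).
  move=> i; have [fv _] := Gd_var B i.
  by have [-> _] := spow_exp (m i) fv; apply: GdX; apply: Gd_var.
have := Gdbig (index_enum 'I_n.+1) h.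
by rewrite mdegE; under eq_bigr do rewrite mul1n.
Qed.
End Inv.

Lemma digits k B (g h : 'I_k -> nat) : (0 < B)%N ->
  (forall i, g i < B)%N -> (forall i, h i < B)%N ->
  (\sum_(i < k) g i * B ^ i = \sum_(i < k) h i * B ^ i)%N -> forall i, g i = h i.
Proof.
move=> B0; elim: k g h => [|k IH] g h hg hh e i; first by case: i.
move: e; rewrite !big_ord_recl /= !expn0 !muln1.
have E : forall f : 'I_k.+1 -> nat, (\sum_(i < k) f (lift ord0 i) * B ^ bump 0 i =
    B * \sum_(i < k) f (lift ord0 i) * B ^ i)%N.
  by move=> f; rewrite big_distrr; apply: eq_bigr => j _; rewrite /bump /= add1n expnS mulnCA.
rewrite !E => e.
have e0 : g ord0 = h ord0.
  have := congr1 (modn^~ B) e.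
  by rewrite ![(_ + B * _)%N]addnC ![(B * _)%N]mulnC !modnMDl !modn_small.
have e1 := congr1 (divn^~ B) e.
rewrite ![(_ + B * _)%N]addnC ![(B * _)%N]mulnC !divnMDl // !divn_small // !addn0 in e1.
case: (unliftP ord0 i) => [j ->|->] //.
by apply: (IH (fun j => g (lift ord0 j)) (fun j => h (lift ord0 j))).
Qed.

Lemma F_list (D : unitRingType) (s : D -> D)
  (HF : forall l : seq D, exists x : D, inF s x /\ x \notin l) k :
  exists l : seq D, size l = k /\ uniq l /\ (forall y, y \in l -> inF s y).
Proof.
elim: k => [|k [l [sl [ul hl]]]]; first by exists [::].
have [y [Fy yl]] := HF l.
exists (y :: l); split; first by rewrite /= sl.
split; first by rewrite /= yl ul.
by move=> z; rewrite in_cons => /orP[/eqP -> | /hl].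
Qed.

Lemma nonroot (D : unitRingType) (s : D -> D)
  (Ddiv : forall x : D, x != 0 -> x \is a GRing.unit)
  (HF : forall l : seq D, exists x : D, inF s x /\ x \notin l) (p : {poly D}) :
  p != 0 -> exists x, inF s x /\ p.[x] != 0.
Proof.
move=> p0; apply: NNPP => H.
have [l [sl [ul hl]]] := F_list HF (size p).
suff: (size l < size p)%N by rewrite sl ltnn.
apply: (max_ring_poly_roots p0).
  apply/allP => y /hl Fy; rewrite /root; apply/negPn/negP => hy.
  by apply: H; exists y; split.
elim: l ul hl {sl} => //= y l IH /andP [yl ul] hl.
rewrite IH ?andbT //; last by move=> z zl; apply: hl; rewrite in_cons zl orbT.
apply/allP => z zl; rewrite /diff_roots.
have [[cy _] _] : inF s y /\ True by split => //; apply: hl; rewrite in_cons eqxx.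
rewrite cy eqxx /=; apply: Ddiv; rewrite subr_eq0.
by apply/eqP => ezy; rewrite -ezy zl in yl.
Qed.

Lemma mnm_le_mdeg k (m : 'X_{1..k}) i : (m i <= mdeg m)%N.
Proof. by rewrite mdegE (bigD1 i) //= leq_addr. Qed.

Lemma lift_max_widen n (j : 'I_n) : lift ord_max j = widen_ord (leqnSn n) j.
Proof. by apply: val_inj; rewrite /= /bump leqNgt ltn_ord. Qed.

Lemma E_inj n B (m m0 : 'X_{1..n.+1}) : mdeg m = mdeg m0 -> (mdeg m < B)%N ->
  (\sum_(i < n.+1) wB B i * m i = \sum_(i < n.+1) wB B i * m0 i)%N -> m = m0.
Proof.
move=> ed lt e.
have ew : forall (mm : 'X_{1..n.+1}), (\sum_(i < n.+1) wB B i * mm i =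
     \sum_(i < n) mm (widen_ord (leqnSn n) i) * B ^ i)%N.
  move=> mm; rewrite big_ord_recr /= /wB ltnn mul0n addn0.
  by apply: eq_bigr => i _; rewrite /= ltn_ord mulnC.
rewrite !ew in e.
have B0 : (0 < B)%N by apply: leq_ltn_trans lt.
have hd := digits B0 _ _ e.
have hw : forall j, m (widen_ord (leqnSn n) j) = m0 (widen_ord (leqnSn n) j).
  apply: hd => j; apply: leq_ltn_trans (mnm_le_mdeg _ _) _ => //.
  by rewrite -ed.
have hm : m ord_max = m0 ord_max.
  move: ed; rewrite !mdegE !big_ord_recr /=.
  by under eq_bigr do rewrite hw; move/eqP; rewrite eqn_add2l => /eqP.
apply/mnmP => i; case: (unliftP ord_max i) => [j ->|->] //.
by rewrite lift_max_widen hw.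
Qed.

Theorem lemma3p5 (D : unitRingType)
  (Ddiv : forall x : D, x != 0 -> x \is a GRing.unit)
  (s : {rmorphism D -> D}) (s_bij : bijective s)
  (F_infinite : forall l : seq D, exists x : D, inF s x /\ x \notin l)
  (n : nat) (f : {mpoly D[n.+1]}) (f_neq0 : f != 0) :
  exists (a : D) (a_ : 'I_n -> D),
    (forall i, inF s (a_ i)) /\
    monic_last (a *: subst s a_ f).
Proof.
set m0 := mlead f; set N := mdeg m0; set B := N.+1.
have m0f : m0 \in msupp f := mlead_supp f_neq0.
have leN : forall m, m \in msupp f -> (mdeg m <= N)%N.
  by move=> m /msize_mdeg_lt; rewrite -(mlead_deg f_neq0) ltnS.
set E := fun m : 'X_{1..n.+1} => (\sum_(i < n.+1) wB B i * m i)%N.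
set Q : {poly D} := \sum_(m <- msupp f | mdeg m == N) f@_m *: 'X^(E m).
have cQ : Q`_(E m0) = f@_m0.
  rewrite /Q coef_sum (big_rem m0) //= eqxx.
  rewrite big1_seq ?addr0; first by rewrite coefZ coefXn eqxx mulr1.
  move=> m /andP [/eqP dm mr]; rewrite coefZ coefXn.
  case: eqP => [em|]; last by rewrite mulr0.
  have e : m0 = m by apply: (@E_inj n B) => //; rewrite dm.
  by move: mr; rewrite -e mem_rem_uniqF ?msupp_uniq.
have Q0 : Q != 0.
  by apply/eqP => Q0; move: m0f; rewrite mcoeff_msupp -cQ Q0 coef0 eqxx.
have [x [[cx sx] Qx]] := nonroot Ddiv F_infinite Q0.
set c := Q.[x].
have cE : c = \sum_(m <- msupp f | mdeg m == N) f@_m * x ^+ E m.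
  by rewrite /c /Q horner_sum; apply: eq_bigr => m _; rewrite hornerZ hornerXn.
exists c^-1, (aB x B); split.
  move=> i; rewrite /aB; split; last by rewrite rmorphXn /= sx.
  by move=> y; exact: esym (commrX _ (esym (cx y))).
set g := c^-1 *: subst s (aB x B) f.
have cu : c \is a GRing.unit := Ddiv _ Qx.
have key : forall u : 'X_{1..n.+1}, (N <= u ord_max)%N ->
    (subst s (aB x B) f)@_u = if u == Ud n N then c else 0.
  move=> u hu; rewrite /subst raddf_sum /=.
  have tm : forall m : 'X_{1..n.+1}, m \in msupp f ->
     (f@_m *: \big[@smul D s n.+1/1]_(i < n.+1) spow s (subst_var (aB x B) i) (m i))@_u
     = if mdeg m == N then f@_m * x ^+ E m * (u == Ud n N)%:R else 0.
    move=> m mf; have [_ [r [-> hr]]] := Gd_P sx B m.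
    rewrite mcoeffZ mcoeffD mcoeffZ mcoeffX.
    have r0 : r@_u = 0.
      apply: memN_msupp_eq0; apply/negP => /hr.
      by rewrite ltnNge (leq_trans (leN m mf) hu).
    rewrite r0 addr0.
    case: (eqVneq (Ud n (mdeg m)) u) => [eu | neu].
      have dm : mdeg m = N.
        apply/eqP; rewrite eqn_leq leN //=.
        by move: hu; rewrite -eu Ud_max.
      by rewrite -eu dm !eqxx /= !mulr1.
    rewrite /= mulr0 mulr0.
    have [dm|] := eqVneq (mdeg m) N => //.
    have [eu|_] := eqVneq u (Ud n N); last by rewrite /= mulr0.
    by case/eqP: neu; rewrite dm eu.
  rewrite (eq_big_seq _ tm) -big_mkcond /= -big_distrl /= -cE.
  by case: eqP => _; rewrite /= ?mulr1 ?mulr0.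
have gk : forall u : 'X_{1..n.+1}, (N <= u ord_max)%N -> g@_u = (u == Ud n N)%:R.
  move=> u hu; rewrite mcoeffZ key //.
  by case: eqP => _; [rewrite mulVr | rewrite mulr0].
have UdN : (Ud n N) ord_max = N := Ud_max n N.
have g1 : g@_(Ud n N) = 1 by rewrite gk ?UdN // eqxx.
have gsupp : Ud n N \in msupp g by rewrite mcoeff_msupp g1 oner_neq0.
have gle : forall m : 'X_{1..n.+1}, m \in msupp g -> (m ord_max <= N)%N.
  move=> m; rewrite mcoeff_msupp; apply: contraTT; rewrite -ltnNge => lt.
  rewrite negbK gk ?(ltnW lt) //.
  have : m != Ud n N by apply: contraTneq lt => ->; rewrite UdN ltnn.
  by move/negbTE => ->.
split.
  by apply/eqP => g0; move: g1; rewrite g0 mcoeff0 => /esym/eqP; rewrite oner_eq0.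
have dl : deg_last g = N.
  rewrite /deg_last; apply/eqP; rewrite eqn_leq; apply/andP; split.
    by apply/bigmax_leqP_seq => m mg _; exact: gle.
  rewrite -{1}UdN.
  exact: (@leq_bigmax_seq _ (msupp g) xpredT (fun m : 'X_{1..n.+1} => m ord_max) (Ud n N) gsupp isT).
rewrite dl /coef_last (big_rem (Ud n N)) //= UdN eqxx g1 scale1r.
rewrite big1_seq ?addr0.
  have -> : drop_last (Ud n N) = 0%MM.
    apply/mnmP => i; rewrite mnmE mnm0E /Ud mulmnE mnm1E.
    suff -> : (ord_max == widen_ord (leqnSn n) i) = false by [].
    by apply/negbTE; rewrite -val_eqE /= neq_ltn ltn_ord orbT.
  exact: mpolyX0.
move=> m /andP [/eqP md mr].
have mne : m != Ud n N by apply: contraTneq mr => ->; rewrite mem_rem_uniqF ?msupp_uniq.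
by rewrite gk ?md // (negbTE mne) scale0r.
Qed.
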